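(* For every positive integer $N$ there exist a connected simple graph $G$ and a vertex $v\in V(G)$ which is not a cut vertex of $G$ such that $|\chi_{dom}(G)-\chi_{dom}(G-v)|\geq N$. (For instance, $G$ a wheel $W_n$ with $n$ large and $v$ its center, so that $G-v$ is the cycle $C_n$.)
   Context: All graphs are finite and simple. A dominated coloring of a graph $H$ is a proper vertex coloring of $H$ such that for every color class $C$ there is a vertex $x\in V(H)$ adjacent to every vertex of $C$. The dominated chromatic number $\chi_{dom}(H)$ is the minimum number of colors in a dominated coloring of $H$. $G-v$ denotes the graph obtained from $G$ by deleting $v$ and all edges incident with $v$. The wheel $W_n$ is the graph obtained from the cycle $C_n$ by adding one new vertex (the center) adjacent to all vertices of the cycle. *)

(* Defs.v *)
From mathcomp Require Import all_boot.
Set Implicit Arguments. Unset Strict Implicit. Unset Printing Implicit Defensive.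

Definition simple_graph (T : finType) (e : rel T) : Prop :=
  symmetric e /\ irreflexive e.

Definition connected_graph (T : finType) (e : rel T) : Prop :=
  forall x y : T, connect e x y.

Definition del_vertex (T : finType) (e : rel T) (v : T)
  : rel {x : T | x != v} :=
  fun a b => e (val a) (val b).
Arguments del_vertex {T} e v.

(* v is a cut vertex: deleting it disconnects two vertices that were
   connected in G (i.e. G - v has more components than G). *)
Definition cut_vertex (T : finType) (e : rel T) (v : T) : Prop :=
  exists a b : {x : T | x != v},
    connect e (val a) (val b) /\ ~~ connect (del_vertex e v) a b.

Definition dominated_coloring (T : finType) (e : rel T) (k : nat)
    (c : T -> 'I_k) : Prop :=
  (forall x y, e x y -> c x != c y) /\
  (forall y, exists x, forall z, c z = c y -> e x z).

Definition is_chi_dom (T : finType) (e : rel T) (m : nat) : Prop :=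
  (exists c : T -> 'I_m, dominated_coloring e c) /\
  (forall k (c : T -> 'I_k), dominated_coloring e c -> m <= k).

(* Main.v *)
Require Import Defs.
From mathcomp Require Import all_boot zify.
From Stdlib Require Import Classical.
Set Implicit Arguments. Unset Strict Implicit.

Lemma chi_exists (T : finType) (e : rel T) k (c : T -> 'I_k) :
  dominated_coloring e c -> exists m, is_chi_dom e m /\ m <= k.
Proof.
elim/ltn_ind: k c => k IH c hc.
case: (classic (exists k' (c' : T -> 'I_k'), k' < k /\ dominated_coloring e c')).
  move=> [k' [c' [lt hc']]]; have [m [hm le]] := IH k' lt c' hc'.
  by exists m; split=> //; apply: leq_trans le (ltnW lt).
move=> H; exists k; split=> //; split; first by exists c.
move=> k' c' hc'; rewrite leqNgt; apply/negP => lt; apply: H; by exists k', c'.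
Qed.

Lemma dom_lb (T : finType) (e : rel T) k (c : T -> 'I_k) :
  dominated_coloring e c -> (forall x, #|[pred z | e x z]| <= 2) -> #|T| <= k * 2.
Proof.
move=> [_ hd] hdeg.
have -> : #|T| = \sum_(i < k) #|[pred z | c z == i]|.
  rewrite -sum1_card (partition_big c xpredT) //=; apply: eq_bigr => i _.
  by rewrite sum1_card.
apply: (@leq_trans (\sum_(i < k) 2)); last by rewrite sum_nat_const card_ord.
apply: leq_sum => i _.
case: (pickP [pred z | c z == i]) => [y /eqP hy | h0].
  have [x hx] := hd y; apply: leq_trans (hdeg x).
  apply: subset_leq_card; apply/subsetP => z; rewrite !inE => /eqP hz.
  by apply: hx; rewrite hz hy.
by rewrite (eq_card0 h0).
Qed.

Definition fan n : rel 'I_n := fun x y =>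
  (nat_of_ord x != y) && [|| nat_of_ord x == 0, nat_of_ord y == 0,
                             (nat_of_ord x).+1 == y | (nat_of_ord y).+1 == x].

Lemma fan_simple n : simple_graph (@fan n).
Proof.
split; last by move=> x; rewrite /fan eqxx.
move=> x y; rewrite /fan eq_sym; congr andb.
by case: (_ == 0); case: (_ == 0); case: (_ == _); case: (_ == _).
Qed.

Lemma fan_conn p : connected_graph (@fan p.+2).
Proof.
have h : forall x : 'I_p.+2, connect (@fan p.+2) x ord0.
  move=> x; case: (eqVneq (nat_of_ord x) 0) => hx.
    by have -> : x = ord0 by apply: val_inj.
  by apply: connect1; by rewrite /fan /= hx /= orbT.
move=> x y; apply: connect_trans (h x) _.
rewrite sym_connect_sym; first exact: h.
by case: (fan_simple p.+2).
Qed.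

Definition col n (x : 'I_n) : 'I_3 :=
  if nat_of_ord x == 0 then @Ordinal 3 0 isT
  else if odd x then @Ordinal 3 1 isT else @Ordinal 3 2 isT.

Lemma col_dom p : dominated_coloring (@fan p.+2) (@col p.+2).
Proof.
split.
  move=> [x hx] [y hy]; rewrite /fan /col /= => /andP [neq H].
  move: neq H; case: x hx => [|x] hx; case: y hy => [|y] hy //=.
  - by case: ifP.
  - by case: ifP.
  - by rewrite !eqSS => _ /orP[]/eqP <-; rewrite /=; [case: (odd x) | case: (odd y)]; apply/eqP => /(congr1 val).
move=> y; case: (eqVneq (nat_of_ord y) 0) => hy.
  exists (inord 1) => z; rewrite /col hy /=; case: ifP => hz.
    by rewrite /fan inordK // (eqP hz).
  by case: ifP => _ /(congr1 val).
exists ord0 => z; rewrite /col (negbTE hy) /fan /=; case: ifP => hz.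
  by case: ifP => _ /(congr1 val).
by rewrite eq_sym hz.
Qed.

Section P.
Variable p : nat.
Let T := {x : 'I_p.+2 | x != ord0}.
Let d := del_vertex (@fan p.+2) ord0.

Definition mkT k (hk : k.+1 < p.+2) : T := exist _ (Ordinal hk) isT.

Lemma d_conn : forall a b : T, connect d a b.
Proof.
have w1 : 1 < p.+2 by [].
have h : forall k a, val (val a) = k.+1 -> connect d a (mkT w1).
  elim=> [|k IH] a ha.
    by have -> : a = mkT w1 by apply: val_inj; apply: val_inj.
  have hk : k.+1 < p.+2 by case: a ha => [[a' ha'] /= _] hh; rewrite hh in ha'; lia.
  apply: connect_trans (IH (mkT hk) erefl).
  apply: connect1; rewrite /d /del_vertex /fan /= ha; apply/andP; split; [lia|by rewrite eqxx !orbT].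
have h' : forall a, connect d a (mkT w1).
  move=> a; apply: (h (val (val a)).-1); case: a => [[a ha] /= a0].
  by move: a0; rewrite -val_eqE /=; case: a ha.
move=> a b; apply: connect_trans (h' a) _.
rewrite sym_connect_sym; first exact: h'.
by move=> x y; rewrite /d /del_vertex /fan eq_sym; congr andb;
  case: (_ == 0); case: (_ == 0); case: (_ == _); case: (_ == _).
Qed.

Lemma card_le_seq (A : pred T) (f : T -> nat) (s : seq nat) :
  injective f -> (forall z, A z -> f z \in s) -> #|A| <= size s.
Proof.
move=> fi fs; rewrite cardE -(size_map f); apply: uniq_leq_size.
  by rewrite map_inj_uniq ?enum_uniq.
by move=> y /mapP [z hz ->]; apply: fs; rewrite mem_enum in hz.
Qed.

Lemma d_deg x : #|[pred z | d x z]| <= 2.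
Proof.
apply: (@card_le_seq _ (fun z : T => val (val z)) [:: (val (val x)).+1; (val (val x)).-1]).
  by move=> a b /val_inj /val_inj.
case: x => [[x hx] /= x0] [[z hz] /= z0]; rewrite /d /del_vertex /fan /=.
move: x0 z0; rewrite -!val_eqE /= => x0 z0.
rewrite (negbTE x0) (negbTE z0) /= => /andP [_ /orP [] /eqP <-]; rewrite !inE ?eqxx //.
by rewrite orbT.
Qed.

Lemma d_color : 0 < p -> dominated_coloring d (@enum_rank T).
Proof.
move=> p0; split.
  move=> x y; rewrite /d /del_vertex /fan => /andP [ne _].
  rewrite (inj_eq enum_rank_inj); apply: contra ne => /eqP -> //.
move=> y; case: y => [[y hy] /= y0]; have y0p : y != 0 by move: (y0); rewrite -val_eqE.
have [y1 | y1] := eqVneq y 1.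
  have h2 : 1.+1 < p.+2 by lia.
  exists (mkT h2) => z /enum_rank_inj ->; rewrite /d /del_vertex /fan /= y1 //.
have h2 : y.-2.+1 < p.+2 by lia.
exists (mkT h2) => z /enum_rank_inj ->; rewrite /d /del_vertex /fan /=.
apply/andP; split; first lia. by rewrite (_ : y.-2.+2 = y) ?eqxx ?orbT //; lia.
Qed.

Lemma card_T : #|{: {x : 'I_p.+2 | x != ord0}}| = p.+1.
Proof. by rewrite card_sig cardC1 card_ord. Qed.
End P.

Theorem theorem2p3 (N : nat) (hN : 0 < N) :
  exists (n : nat) (e : rel 'I_n) (v : 'I_n) (m1 m2 : nat),
    simple_graph e /\ connected_graph e /\ ~ cut_vertex e v /\
    is_chi_dom e m1 /\ is_chi_dom (del_vertex e v) m2 /\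
    N <= maxn (m1 - m2) (m2 - m1).
Proof.
pose p := (2 * N + 5).
have [m1 [h1 le1]] := chi_exists (col_dom p).
have p0 : 0 < p by rewrite /p; lia.
have [m2 [h2 _]] := chi_exists (d_color p0).
exists p.+2, (@fan p.+2), ord0, m1, m2.
split; first exact: fan_simple.
split; first exact: fan_conn.
split.
  move=> [a [b [_ nab]]]; move/negP: nab; apply; exact: (@d_conn p).
split=> //; split=> //.
have [[c hc] _] := h2.
have := dom_lb hc (@d_deg p); rewrite card_T => hle.
have : N <= m2 - m1 by rewrite /p in hle; lia.
move=> h; apply: leq_trans h _; exact: leq_maxr.
Qed.
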